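(* Let $X$ and $Y$ be real random variables with densities $p_X,p_Y$, where $p_Y(y)\le C<\infty$ for all $y\in\mathbb{R}$ and the law of $X$ is absolutely continuous with respect to the law of $Y$. Then for every $A>0$, with $\hat{\mathcal{A}}:=\{y:\,p_Y(y)\ge 1/A\}$, and every $s>1$, \[ \begin{aligned} \mathrm{KL}(X\|Y)\le\;&(1+|\ln C|)\big[\mathbb{P}(Y\in\hat{\mathcal{A}}^c)+\|p_X-p_Y\|_1\big]\\ &+\big(\mathbb{E}_X|\ln p_Y(X)|^s\big)^{1/s}\big[\mathbb{P}(Y\in\hat{\mathcal{A}}^c)+\|p_X-p_Y\|_1\big]^{1-1/s}\\ &+(1+A)\|p_X-p_Y\|_2^2 . \end{aligned} \]
   Context: $\mathrm{KL}(X\|Y)=\int p_X\ln(p_X/p_Y)$ is the Kullback–Leibler divergence; $\|\cdot\|_q$ is the $L^q(\mathbb{R})$ norm with respect to Lebesgue measure; $\mathbb{E}_X|\ln p_Y(X)|^s=\int p_X|\ln p_Y|^s$. *)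

(* Defs.v *)
From HB Require Import structures.
From mathcomp Require Import all_boot all_order all_algebra.
From mathcomp Require Import all_classical all_reals all_analysis.
Set Implicit Arguments. Unset Strict Implicit. Unset Printing Implicit Defensive.
Import Order.TTheory GRing.Theory Num.Theory.
Local Open Scope classical_set_scope.
Local Open Scope ring_scope.

Definition is_density (R : realType) (p : R -> R) : Prop :=
  measurable_fun setT p /\ (forall x, 0 <= p x) /\
  (\int[@lebesgue_measure R]_x (p x)%:E = 1)%E.

Definition law_abs_cont (R : realType) (pX pY : R -> R) : Prop :=
  forall A : set R, measurable A ->
    (\int[@lebesgue_measure R]_(x in A) (pY x)%:E = 0)%E ->
    (\int[@lebesgue_measure R]_(x in A) (pX x)%:E = 0)%E.

Definition KL (R : realType) (pX pY : R -> R) : \bar R :=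
  (\int[@lebesgue_measure R]_x (pX x * ln (pX x / pY x))%:E)%E.

Definition Lq (R : realType) (q : R) (f : R -> R) : \bar R :=
  Lnorm (@lebesgue_measure R) q%:E (EFin \o f).

Definition Elog (R : realType) (pX pY : R -> R) (s : R) : \bar R :=
  (\int[@lebesgue_measure R]_x (pX x * `|ln (pY x)| `^ s)%:E)%E.

Definition Prob (R : realType) (pY : R -> R) (S : set R) : \bar R :=
  (\int[@lebesgue_measure R]_(x in S) (pY x)%:E)%E.

(* Main.v *)
Require Import Defs.
From HB Require Import structures.
From mathcomp Require Import all_boot all_order all_algebra.
From mathcomp Require Import all_classical all_reals all_analysis.
From mathcomp Require Import ring lra.
From mathcomp Require Import measurable_realfun.
Import Order.TTheory GRing.Theory Num.Theory.
Local Open Scope classical_set_scope.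
Local Open Scope ring_scope.

Lemma ln_le_sub1 (R : realType) (x : R) : 0 < x -> ln x <= x - 1.
Proof.
move=> x0; have := @le_ln1Dx R (x - 1).
have -> : 1 + (x - 1) = x by ring.
apply; lra.
Qed.

Lemma ln2_le1 (R : realType) : ln (2 : R) <= 1.
Proof. have := (@ln_le_sub1 R 2 (ltr0n _ 2)); lra. Qed.

Lemma ln4_le (R : realType) : ln (4 : R) <= 3 / 2.
Proof.
have h : (4 : R) <= expR (3 / 2).
  have -> : (3 / 2 : R) = 12%:R * (1 / 8) by rewrite -[12%:R]/(12 : R); field.
  rewrite expRM_natl.
  apply: le_trans (_ : (9 / 8 : R) ^+ 12 <= _).
    have h1 : (8/5 : R) <= (9/8)^+4 by rewrite !exprS expr0; lra.
    have -> : (12 = 4 * 3)%N by []. rewrite exprM.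
    apply: le_trans (_ : (8/5 : R)^+3 <= _); first by rewrite !exprS expr0; lra.
    by apply: lerXn2r; rewrite ?nnegrE //; lra.
  apply: lerXn2r; rewrite ?nnegrE ?expR_ge0 //.
  have := expR_ge1Dx (1/8 : R). apply: le_trans. lra.
rewrite -(expRK (3/2 : R)) ler_ln // posrE ?expR_gt0 //.
Qed.

Lemma ln_le_quarter (R : realType) (x : R) : 0 < x -> ln x <= x / 4 + 1 / 2.
Proof.
move=> x0.
have -> : x = (x / 4) * 4 by field.
rewrite lnM ?posrE ?divr_gt0 //.
have := @ln_le_sub1 R (x / 4) (divr_gt0 x0 (ltr0n _ 4)).
have := ln4_le R.
have -> : x / 4 * 4 / 4 = x / 4 by field.
lra.
Qed.

Lemma pointwise (R : realType) (x y C A : R) : 0 <= x -> 0 <= y -> y <= C -> 0 < A ->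
  x * ln (x / y) <= (1 + `|ln C|) * (((y < A^-1)%R%:R : R) * y + `|x - y|)
     + ((y < A^-1)%R%:R : R) * (x * `|ln y|) + (1 + A) * (x - y) ^+ 2.
Proof.
move=> x0 y0 yC A0.
set L := 1 + `|ln C|.
have L1 : 1 <= L by rewrite /L lerDl normr_ge0.
have hsq : 0 <= (x - y) ^+ 2 by exact: sqr_ge0.
have habs : x - y <= `|x - y| by exact: ler_norm.
have habs' : y - x <= `|x - y| by rewrite -normrN opprB ler_norm.
have hb : 0 <= ((y < A^-1)%R%:R : R) :> R by rewrite ler0n.
have hlny : 0 <= x * `|ln y| by rewrite mulr_ge0.
have hRHS : 0 <= (1 + `|ln C|) * (((y < A^-1)%R%:R : R) * y + `|x - y|)
     + ((y < A^-1)%R%:R : R) * (x * `|ln y|) + (1 + A) * (x - y) ^+ 2.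
  have h1 : 0 <= L * (((y < A^-1)%R%:R : R) * y + `|x - y|).
    by apply: mulr_ge0; [lra | apply: addr_ge0; [apply: mulr_ge0|]].
  have h2 : 0 <= ((y < A^-1)%R%:R : R) * (x * `|ln y|) by apply: mulr_ge0.
  have h3 : 0 <= (1 + A) * (x - y) ^+ 2 by apply: mulr_ge0 => //; lra.
  rewrite -/L; lra.
case: (eqVneq y 0) => [y00|yn0].
  by rewrite {1}y00 invr0 mulr0 (ln0 (lexx 0)) mulr0.
have ypos : 0 < y by rewrite lt0r yn0.
case: (eqVneq x 0) => [x00|xn0]; first by rewrite {1}x00 mul0r.
have xpos : 0 < x by rewrite lt0r xn0.
have Cpos : 0 < C by apply: lt_le_trans yC.
case: (ltrP y A^-1) => hy.
- have -> : (true%:R : R) = 1 by [].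
  rewrite !mul1r ln_div ?posrE //.
  have hny : - (x * ln y) <= x * `|ln y|.
    by rewrite -mulrN ler_wpM2l // -normrN ler_norm.
  suff hxl : x * ln x <= L * (y + `|x - y|) + (1 + A) * (x - y) ^+ 2.
    rewrite mulrBr; lra.
  have hyz : 0 <= y + `|x - y| by lra.
  have hL : y + `|x - y| <= L * (y + `|x - y|) by nra.
  have hA : (x - y) ^+ 2 <= (1 + A) * (x - y) ^+ 2 by nra.
  case: (lerP x (2 * C)) => hx.
  + have hlx : ln x <= L.
      apply: le_trans (_ : ln (2 * C) <= _).
        by rewrite ler_ln ?posrE ?mulr_gt0.
      rewrite lnM ?posrE // /L.
      have := ln2_le1 R; have := ler_norm (ln C); lra.
    have : x * ln x <= x * L by rewrite ler_wpM2l.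
    have : x * L <= (y + `|x - y|) * L by rewrite ler_wpM2r //; lra.
    lra.
  + have hlx := @ln_le_quarter R x xpos.
    have h1 : x * ln x <= x * (x / 4 + 1 / 2) by rewrite ler_wpM2l.
    have hxy : x / 2 <= x - y by lra.
    have h2 : (x / 2) ^+ 2 <= (x - y) ^+ 2.
      by rewrite lerXn2r // ?nnegrE; lra.
    have e : x * (x / 4 + 1 / 2) = (x / 2) ^+ 2 + x / 2 by rewrite expr2; field.
    rewrite e in h1.
    lra.
- have -> : (false%:R : R) = 0 by [].
  rewrite !mul0r add0r addr0.
  have hAy : 1 <= A * y.
    by have := ler_wpM2l (ltW A0) hy; rewrite mulfV ?gt_eqF.
  have hl := @ln_le_sub1 R (x / y) (divr_gt0 xpos ypos).
  have h1 : x * ln (x / y) <= x * (x / y - 1) by rewrite ler_wpM2l.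
  have e : x * (x / y - 1) = (x - y) ^+ 2 / y + (x - y) by rewrite expr2; field.
  rewrite e in h1.
  have h2 : (x - y) ^+ 2 / y <= A * (x - y) ^+ 2.
    rewrite ler_pdivrMr //; nra.
  have hL : `|x - y| <= L * `|x - y| by have := normr_ge0 (x - y); nra.
  lra.
Qed.

Theorem theorem2p2 (R : realType) (pX pY : R -> R) (C : R) :
  is_density pX -> is_density pY ->
  (forall y, pY y <= C) ->
  law_abs_cont pX pY ->
  forall A : R, 0 < A ->
  forall s : R, 1 < s ->
  let Ahc := [set y | pY y < A^-1] in
  let B := (Prob pY Ahc + Lq 1 (pX \- pY)%R)%E in
  (KL pX pY <=
     (1 + `|ln C|)%:E * B
     + (Elog pX pY s `^ s^-1) * (B `^ (1 - s^-1))
     + (1 + A)%:E * (Lq 2 (pX \- pY)%R) ^+ 2)%E.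
Proof.
move=> [mX [X0 _]] [mY [Y0 _]] YC _ A A0 s s1.
cbv zeta.
set Ahc := [set y | pY y < A^-1].
set B := (Prob pY Ahc + Lq 1 (pX \- pY)%R)%E.
set mu := @lebesgue_measure R.
have mAhc : measurable Ahc.
  have := mY measurableT _ (measurable_itv `]-oo, A^-1[).
  rewrite setTI; congr measurable; apply/seteqP; split => t /=; by rewrite in_itv.
have mP : measurable [set t | 0 < pY t].
  have := mY measurableT _ (measurable_itv `]0, +oo[).
  rewrite setTI; congr measurable; apply/seteqP; split => t /=; by rewrite in_itv /= andbT.
set ind := \1_Ahc : R -> R.
have mind : measurable_fun setT ind by exact: measurable_realfun.measurable_indic.
have indE t : ind t = ((pY t < A^-1)%R%:R : R).
  rewrite /ind indicE /Ahc; case: (boolP (pY t < A^-1)) => h; [rewrite mem_set | rewrite memNset] => //; exact/negP.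
set L := 1 + `|ln C|.
set d := (pX \- pY)%R.
have md : measurable_fun setT d by exact: measurable_funB.
set g1 := fun t => L * (ind t * pY t + `|d t|).
set g2 := fun t => ind t * (pX t * `|ln (pY t)|).
set g3 := fun t => (1 + A) * (d t) ^+ 2.
have mg1 : measurable_fun setT g1.
  apply: measurable_funM => //; apply: measurable_funD.
    exact: measurable_funM.
  exact: (measurableT_comp (@normr_measurable R setT) md).
have mg2 : measurable_fun setT g2.
  apply: measurable_funM => //; apply: measurable_funM => //.
  exact: (measurableT_comp (@normr_measurable R setT) (measurableT_comp (@measurable_ln R) mY)).
have mg3 : measurable_fun setT g3.
  apply: measurable_funM => //; exact: measurable_funX.
have ind01 t : ind t = 0 \/ ind t = 1.
  rewrite indE; case: (pY t < A^-1)%R; by [right | left].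
have ind0 t : 0 <= ind t by case: (ind01 t) => ->.
have g10 t : 0 <= g1 t.
  by apply: mulr_ge0; [rewrite /L addr_ge0 | apply: addr_ge0; [apply: mulr_ge0|]].
have g20 t : 0 <= g2 t by rewrite /g2; apply: mulr_ge0 => //; apply: mulr_ge0.
have g30 t : 0 <= g3 t by rewrite /g3 mulr_ge0 ?sqr_ge0 //; lra.
set f := fun t => pX t * ln (pX t / pY t).
have mf : measurable_fun setT f.
  have -> : f = fun t => \1_[set t | 0 < pY t] t * (pX t * (ln (pX t) - ln (pY t))).
    apply/funext => t; rewrite /f indicE.
    case: (boolP (0 < pY t)) => h.
      rewrite mem_set // mul1r.
      case: (eqVneq (pX t) 0) => [->|hx]; first by rewrite !mul0r.
      by rewrite ln_div // posrE lt0r hx X0.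
    rewrite memNset; last exact/negP.
    have -> : pY t = 0 by apply/eqP; rewrite eq_le Y0 andbT leNgt.
    by rewrite invr0 mulr0 ln0 // mulr0 mul0r.
  apply: measurable_funM; first exact: measurable_indic.
  apply: measurable_funM => //; apply: measurable_funB.
    exact: (measurableT_comp (@measurable_ln R) mX).
  exact: (measurableT_comp (@measurable_ln R) mY).
have hKL : (KL pX pY <= \int[mu]_t (g1 t + g2 t + g3 t)%:E)%E.
  rewrite /KL integralE.
  apply: (@le_trans _ _ (\int[mu]_t (fun t => (f t)%:E)^\+ t)%E).
    rewrite -[X in (_ <= X)%E]sube0; apply: leeB; first exact: lexx.
    by apply: integral_ge0 => t _; exact: funeneg_ge0.
  apply: ge0_le_integral => //.
  - by apply: measurable_funepos; apply/measurable_EFinP.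
  - by apply/measurable_EFinP; apply: measurable_funD => //; apply: measurable_funD.
  move=> t _; rewrite funeposE ge_max; apply/andP; split; last first.
    by rewrite lee_fin addr_ge0 ?addr_ge0.
  rewrite lee_fin /f /g1 /g2 /g3 /d /= indE.
  exact: pointwise.
have mE (h : R -> R) : measurable_fun setT h -> measurable_fun setT (fun t => (h t)%:E).
  by move=> mh; apply/measurable_EFinP.
have hsplit : (\int[mu]_t (g1 t + g2 t + g3 t)%:E =
    \int[mu]_t (g1 t)%:E + \int[mu]_t (g2 t)%:E + \int[mu]_t (g3 t)%:E)%E.
  under eq_integral do rewrite !EFinD.
  rewrite ge0_integralD //; [rewrite ge0_integralD //| | | |].
  all: try by move=> t _; rewrite lee_fin.
  all: try by apply: mE.
  all: try by apply: emeasurable_funD; apply: mE.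
  all: try by move=> t _; rewrite -EFinD lee_fin addr_ge0.
have hProb : Prob pY Ahc = (\int[mu]_t (ind t * pY t)%:E)%E.
  rewrite /Prob integral_mkcond; apply: eq_integral => t _.
  rewrite /patch /ind indicE; case: (t \in Ahc) => /=.
    by rewrite mul1r.
  by rewrite mul0r.
have hL1 : Lq 1 d = (\int[mu]_t (`|d t|)%:E)%E.
  by rewrite /Lq Lnorm1; apply: eq_integral => t _; rewrite /comp abse_EFin.
have h1 : (\int[mu]_t (g1 t)%:E = L%:E * B)%E.
  rewrite /g1; under eq_integral do rewrite EFinM.
  rewrite ge0_integralZl //; last 3 first.
  - apply: mE; apply: measurable_funD; first exact: measurable_funM.
    exact: (measurableT_comp (@normr_measurable R setT) md).
  - by move=> t _; rewrite lee_fin addr_ge0 ?mulr_ge0.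
  - by rewrite lee_fin /L addr_ge0.
  congr (_ * _)%E; rewrite /B hProb -/d hL1.
  under eq_integral do rewrite EFinD.
  rewrite ge0_integralD //.
  all: try by move=> t _; rewrite lee_fin ?mulr_ge0.
  all: try by apply: mE; exact: measurable_funM.
  all: try by apply: mE; exact: (measurableT_comp (@normr_measurable R setT) md).
have hL2 : ((Lq 2 d) ^+ 2 = \int[mu]_t ((d t) ^+ 2)%:E)%E.
  have N0 : (0 <= Lq 2 d)%E by exact: Lnorm_ge0.
  have -> : ((Lq 2 d) ^+ 2 = (Lq 2 d) `^ 2)%E.
    move: N0; case: (Lq 2 d) => [r||] //.
      rewrite lee_fin => r0.
      by rewrite -EFin_expe poweR_EFin powR_mulrn.
    by move=> _; rewrite poweRyr // expe2 mulyy.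
  rewrite /Lq poweR_Lnorm //; apply: eq_integral => t _.
  by rewrite /comp abse_EFin poweR_EFin powR_mulrn // real_normK // num_real.
have h3 : (\int[mu]_t (g3 t)%:E = (1 + A)%:E * (Lq 2 d) ^+ 2)%E.
  rewrite hL2 /g3; under eq_integral do rewrite EFinM.
  rewrite ge0_integralZl //.
  - by apply: mE; exact: measurable_funX.
  - by move=> t _; rewrite lee_fin sqr_ge0.
  - by rewrite lee_fin; lra.
have s0 : 0 < s by apply: lt_trans s1.
have si1 : s^-1 < 1 by rewrite invf_lt1.
have r0 : 0 < 1 - s^-1 by rewrite subr_gt0.
set q := (1 - s^-1)^-1.
have q0 : 0 < q by rewrite invr_gt0.
have pq : s^-1 + q^-1 = 1 by rewrite /q invrK addrC subrK.
set F := fun t => pX t `^ s^-1 * `|ln (pY t)|.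
set G := fun t => ind t * pX t `^ (1 - s^-1).
have mF : measurable_fun setT F.
  apply: measurable_funM.
    exact: (measurableT_comp (@measurable_powR R _) mX).
  exact: (measurableT_comp (@normr_measurable R setT) (measurableT_comp (@measurable_ln R) mY)).
have mG : measurable_fun setT G.
  apply: measurable_funM => //.
  exact: (measurableT_comp (@measurable_powR R _) mX).
have hold := hoelder mu mF mG s0 q0 pq.
have e1 : ('N[mu]_1[EFin \o (F \* G)%R] = \int[mu]_t (g2 t)%:E)%E.
  rewrite Lnorm1; apply: eq_integral => t _; rewrite /comp abse_EFin; congr EFin.
  have hp : pX t `^ s^-1 * pX t `^ (1 - s^-1) = pX t.
    rewrite -powRD; last by rewrite addrC subrK oner_eq0.
    by rewrite addrC subrK powRr1.
  have -> : (F \* G)%R t = ind t * (pX t `^ s^-1 * pX t `^ (1 - s^-1)) * `|ln (pY t)|.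
    by rewrite /F /G /=; ring.
  by rewrite hp -mulrA ger0_norm //; exact: g20.
have e2 : ('N[mu]_s%:E[EFin \o F] = Elog pX pY s `^ s^-1)%E.
  rewrite unlock /Elog; congr (_ `^ _)%E; apply: eq_integral => t _.
  rewrite /comp abse_EFin poweR_EFin; congr EFin.
  rewrite ger0_norm; last by rewrite /F mulr_ge0 ?powR_ge0.
  rewrite /F powRM ?powR_ge0 //.
  by rewrite -powRrM mulVf ?gt_eqF // powRr1.
have e3 : ('N[mu]_q%:E[EFin \o G] = (\int[mu]_t (ind t * pX t)%:E) `^ (1 - s^-1))%E.
  rewrite unlock /q invrK; congr (_ `^ _)%E; apply: eq_integral => t _.
  rewrite /comp abse_EFin poweR_EFin; congr EFin.
  rewrite ger0_norm; last by rewrite /G mulr_ge0 ?powR_ge0.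
  rewrite /G powRM ?powR_ge0 //.
  rewrite -powRrM mulfV ?gt_eqF // powRr1 //.
  by case: (ind01 t) => ->; rewrite ?powR0 ?powR1 // gt_eqF.
have e4 : (\int[mu]_t (ind t * pX t)%:E <= B)%E.
  rewrite /B hProb -/d hL1 -ge0_integralD //.
  - apply: ge0_le_integral => //.
    + by move=> t _; rewrite lee_fin mulr_ge0.
    + by apply: mE; exact: measurable_funM.
    + by apply: emeasurable_funD; apply: mE;
        [exact: measurable_funM | exact: (measurableT_comp (@normr_measurable R setT) md)].
    + move=> t _; rewrite -EFinD lee_fin /d /=.
      have := ler_norm (pX t - pY t).
      by case: (ind01 t) => ->; rewrite ?mul0r ?mul1r ?add0r //; lra.
  - by move=> t _; rewrite lee_fin mulr_ge0.
  - by apply: mE; exact: measurable_funM.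
  - by apply: mE; exact: (measurableT_comp (@normr_measurable R setT) md).
have h2 : (\int[mu]_t (g2 t)%:E <= Elog pX pY s `^ s^-1 * B `^ (1 - s^-1))%E.
  rewrite -e1; apply: le_trans hold _; rewrite e2 e3.
  apply: lee_pmul => //; try exact: poweR_ge0.
  apply: gt0_ler_poweR => //; first exact: ltW.
  - rewrite in_itv /= leey andbT; apply: integral_ge0 => t _.
    by rewrite lee_fin mulr_ge0.
  - rewrite in_itv /= leey andbT; apply: le_trans e4.
    apply: integral_ge0 => t _.
    by rewrite lee_fin mulr_ge0.
rewrite hsplit in hKL; apply: le_trans hKL _.
rewrite h1 h3; apply: leeD => //; apply: leeD => //.
Qed.
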